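(* Let $R$ be a commutative ring in which $2$ is invertible and let $Q$ be a free $R$-module of rank $n$ with a fixed ordered basis. Let $\varphi'$ and $\varphi^*$ be invertible symmetric $n\times n$ matrices defining quadratic forms on $Q$ (giving quadratic spaces $Q_{\varphi'}$, $Q_{\varphi^*}$), with $\varphi'=\epsilon^t\varphi^*\epsilon$ for some $\epsilon\in\mathrm{GL}_n(R)$. Let $m\ge1$ and identify automorphisms of $Q\perp\mathbb{H}(R)^m$ with $(n+2m)\times(n+2m)$ matrices via the basis of $Q$ followed by $x_1,\dots,x_m,f_1,\dots,f_m$. Then $\mathrm{EO}_R(Q_{\varphi'},\mathbb{H}(R)^m)=(\epsilon^{-1}\perp I_{2m})\,\mathrm{EO}_R(Q_{\varphi^*},\mathbb{H}(R)^m)\,(\epsilon\perp I_{2m})$.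
   Context: For an invertible symmetric matrix $\varphi$ on $Q$, $\langle a,b\rangle_\varphi=a^t\varphi b$ in coordinates and $q_\varphi(a)=\tfrac12\langle a,a\rangle_\varphi$. $\mathbb{H}(R)^m=\mathbb{H}(P)$ with $P=R^m$, $\mathbb{H}(P)=P\oplus P^*$, basis $x_1,\dots,x_m$ of $P$, dual basis $f_1,\dots,f_m$, form $q(y,g)=g(y)$. DSER transformations on $Q_\varphi\perp\mathbb{H}(P)$: for $R$-linear $\alpha:Q\to P$ let $\alpha^*:P^*\to Q$ satisfy $\langle\alpha^*(g),z\rangle_\varphi=g(\alpha(z))$ for all $z$, and $E_\alpha(z,y,g)=(z-\alpha^*(g),y+\alpha(z)-\tfrac12\alpha\alpha^*(g),g)$; for $\beta:Q\to P^*$ let $\beta^*:P\to Q$ satisfy $\langle\beta^*(y),z\rangle_\varphi=\beta(z)(y)$, and $E^*_\beta(z,y,g)=(z-\beta^*(y),y,g+\beta(z)-\tfrac12\beta\beta^*(y))$. $\mathrm{EO}_R(Q_\varphi,\mathbb{H}(P))$ is the group generated by all $E_\alpha,E^*_\beta$. *)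

(* Defs.v *)
From mathcomp Require Import all_boot all_order all_algebra.
Set Implicit Arguments. Unset Strict Implicit. Unset Printing Implicit Defensive.
Import GRing.Theory.
Local Open Scope ring_scope.

(* Coordinates on Q ⊥ H(R)^m: column vectors of size n + (m + m),
   ordered as (z ; y ; g) with z in Q = R^n (the fixed basis), y in P = R^m
   (basis x_1..x_m), g in P^* (dual basis f_1..f_m).  A linear map acts by
   left multiplication M *m v. *)

Section DSER.
Variables (R : comUnitRingType) (n m : nat).

(* alpha : Q -> P given by A : 'M_(m,n) (y = A z); its adjoint
   alpha^* : P^* -> Q, characterised by <alpha^* g, z>_phi = g(alpha z) = g^T A z,
   is the matrix phi^-1 A^T (phi invertible symmetric). *)
Definition adjQ (phi : 'M[R]_n) (A : 'M[R]_(m, n)) : 'M[R]_(n, m) :=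
  invmx phi *m A^T.

(* E_alpha(z,y,g) = (z - alpha^* g, y + alpha z - 1/2 alpha alpha^* g, g) *)
Definition E_alpha (phi : 'M[R]_n) (A : 'M[R]_(m, n)) : 'M[R]_(n + (m + m)) :=
  block_mx 1%:M (row_mx 0 (- adjQ phi A))
           (col_mx A 0)
           (block_mx 1%:M (- ((2%:R)^-1 *: (A *m adjQ phi A))) 0 1%:M).

(* beta : Q -> P^* given by B : 'M_(m,n) (coordinates of beta z are B z, so
   beta(z)(y) = y^T B z); beta^* : P -> Q with <beta^* y, z>_phi = beta(z)(y).
   E*_beta(z,y,g) = (z - beta^* y, y, g + beta z - 1/2 beta beta^* y) *)
Definition E_beta (phi : 'M[R]_n) (B : 'M[R]_(m, n)) : 'M[R]_(n + (m + m)) :=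
  block_mx 1%:M (row_mx (- adjQ phi B) 0)
           (col_mx 0 B)
           (block_mx 1%:M 0 (- ((2%:R)^-1 *: (B *m adjQ phi B))) 1%:M).

Definition DSER_gen (phi : 'M[R]_n) (M : 'M[R]_(n + (m + m))) : Prop :=
  (exists A, M = E_alpha phi A) \/ (exists B, M = E_beta phi B).

Inductive EO (phi : 'M[R]_n) : 'M[R]_(n + (m + m)) -> Prop :=
| EO_one : EO phi 1%:M
| EO_mul G M : DSER_gen phi G -> EO phi M -> EO phi (G *m M)
| EO_mulV G M : DSER_gen phi G -> EO phi M -> EO phi (invmx G *m M).

End DSER.

Definition perpI (R : comUnitRingType) (n m : nat) (e : 'M[R]_n)
  : 'M[R]_(n + (m + m)) := block_mx e 0 0 1%:M.

(* Main.v *)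
Require Import Defs.
From mathcomp Require Import all_boot all_order all_algebra.
Import GRing.Theory.
Local Open Scope ring_scope.

Section Aux.
Variables (R : comUnitRingType) (n m : nat).

Lemma invmxM' (k : nat) (A B : 'M[R]_k) : A \in unitmx -> B \in unitmx ->
  invmx (A *m B) = invmx B *m invmx A.
Proof.
move=> uA uB.
have uAB : A *m B \in unitmx by rewrite unitmx_mul uA uB.
have h : (A *m B) *m (invmx B *m invmx A) = 1%:M.
  by rewrite -mulmxA (mulmxA B) mulmxV // mul1mx mulmxV.
by rewrite -[RHS]mul1mx -(mulVmx uAB) -mulmxA h mulmx1.
Qed.

Lemma perpI_inv (e : 'M[R]_n) : e \in unitmx ->
  perpI m (invmx e) *m perpI m e = 1%:M /\ perpI m e *m perpI m (invmx e) = 1%:M.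
Proof.
move=> ue; rewrite /perpI !mulmx_block !mulmx0 !mul0mx !addr0 !add0r !mulmx1.
by rewrite mulVmx // mulmxV // -!scalar_mx_block.
Qed.

Lemma adj_conj (phi psi e : 'M[R]_n) (A : 'M[R]_(m, n)) :
  e \in unitmx -> psi \in unitmx -> phi = e^T *m psi *m e ->
  adjQ phi (A *m e) = invmx e *m adjQ psi A.
Proof.
move=> ue up ->; rewrite /adjQ.
have ueT : e^T \in unitmx by rewrite unitmx_tr.
rewrite invmxM' ?unitmx_mul ?ueT ?up // invmxM' // trmx_mul !mulmxA.
by rewrite -!(mulmxA _ (invmx e^T)) mulVmx // mulmx1.
Qed.

Lemma conj_block (e : 'M[R]_n) (X : 'M[R]_(n, m + m)) (Y : 'M[R]_(m + m, n))
  (D : 'M[R]_(m + m)) : e \in unitmx ->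
  perpI m (invmx e) *m block_mx 1%:M X Y D *m perpI m e
  = block_mx 1%:M (invmx e *m X) (Y *m e) D.
Proof.
move=> ue; rewrite /perpI !mulmx_block !mulmx0 !mul0mx !addr0 !add0r
  !mulmx1 !mul1mx mulVmx //.
Qed.

Lemma gen_conj (phi psi e : 'M[R]_n) G :
  e \in unitmx -> psi \in unitmx -> phi = e^T *m psi *m e ->
  DSER_gen psi G -> DSER_gen phi (perpI m (invmx e) *m G *m perpI m e).
Proof.
move=> ue up hphi [[A ->]|[B ->]].
- left; exists (A *m e).
  rewrite /E_alpha (conj_block e (row_mx 0 (- adjQ psi A)) (col_mx A 0) _ ue) mul_mx_row mulmx0 mul_col_mx mul0mx.
  rewrite (adj_conj _ _ _ A ue up hphi) mulmxN.
  have -> : A *m e *m (invmx e *m adjQ psi A) = A *m adjQ psi A.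
    by rewrite mulmxA mulmxK.
  by [].
- right; exists (B *m e).
  rewrite /E_beta (conj_block e (row_mx (- adjQ psi B) 0) (col_mx 0 B) _ ue) mul_mx_row mulmx0 mul_col_mx mul0mx.
  rewrite (adj_conj _ _ _ B ue up hphi) mulmxN.
  have -> : B *m e *m (invmx e *m adjQ psi B) = B *m adjQ psi B.
    by rewrite mulmxA mulmxK.
  by [].
Qed.

Lemma invmx_conj (e : 'M[R]_n) (G : 'M[R]_(n + (m + m))) : e \in unitmx ->
  invmx (perpI m (invmx e) *m G *m perpI m e)
  = perpI m (invmx e) *m invmx G *m perpI m e.
Proof.
move=> ue; have [h1 h2] := perpI_inv _ ue.
have [uP uPi] := mulmx1_unit h2.
have iP : invmx (perpI m e) = perpI m (invmx e).
  by rewrite -[LHS]mulmx1 -h2 mulmxA mulVmx // mul1mx.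
have iPi : invmx (perpI m (invmx e)) = perpI m e.
  by rewrite -[LHS]mulmx1 -h1 mulmxA mulVmx // mul1mx.
case uG: (G \in unitmx).
- by rewrite invmxM' ?unitmx_mul ?uPi ?uG // invmxM' // iP iPi mulmxA.
- have nu : perpI m (invmx e) *m G *m perpI m e \notin unitmx.
    by rewrite !unitmx_mul uG andbF.
  by rewrite (invmx_out (x:=_) nu) (invmx_out (x:=G)) ?inE ?uG.
Qed.

Lemma EO_conj (phi psi e : 'M[R]_n) M :
  e \in unitmx -> psi \in unitmx -> phi = e^T *m psi *m e ->
  EO psi M -> EO phi (perpI m (invmx e) *m M *m perpI m e).
Proof.
move=> ue up hphi; have [h1 h2] := perpI_inv _ ue.
elim=> [|G N hG _ IH|G N hG _ IH].
- by rewrite mulmx1 h1; apply: EO_one.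
- have -> : perpI m (invmx e) *m (G *m N) *m perpI m e =
    (perpI m (invmx e) *m G *m perpI m e) *m (perpI m (invmx e) *m N *m perpI m e).
    by rewrite !mulmxA -(mulmxA _ (perpI m e)) h2 mulmx1.
  exact: (EO_mul (gen_conj _ _ _ _ ue up hphi hG) IH).
- have -> : perpI m (invmx e) *m (invmx G *m N) *m perpI m e =
    invmx (perpI m (invmx e) *m G *m perpI m e) *m (perpI m (invmx e) *m N *m perpI m e).
    by rewrite invmx_conj // !mulmxA -(mulmxA _ (perpI m e)) h2 mulmx1.
  exact: (EO_mulV (gen_conj _ _ _ _ ue up hphi hG) IH).
Qed.

End Aux.

Theorem mainTheorem13 (R : comUnitRingType) (n m : nat)
    (phi' phis eps : 'M[R]_n) :
  (2%:R : R) \is a GRing.unit ->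
  phi' \in unitmx -> phi'^T = phi' ->
  phis \in unitmx -> phis^T = phis ->
  eps \in unitmx -> phi' = eps^T *m phis *m eps ->
  (0 < m)%N ->
  forall M : 'M[R]_(n + (m + m)),
    @EO R n m phi' M <->
    exists N, @EO R n m phis N /\
      M = @perpI R n m (invmx eps) *m N *m @perpI R n m eps.
Proof.
move=> _ u' _ us _ ue hphi _ M; have [h1 h2] := @perpI_inv _ _ m _ ue.
split.
- move=> hM; exists (perpI m eps *m M *m perpI m (invmx eps)); split.
  + have ue' : invmx eps \in unitmx by rewrite unitmx_inv.
    have := @EO_conj R n m phis phi' (invmx eps) M ue' u' (_ : phis = (invmx eps)^T *m phi' *m invmx eps) hM.
    rewrite invmxK; apply.
    rewrite hphi trmx_inv !mulmxA mulVmx ?unitmx_tr // mul1mx.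
    by rewrite -mulmxA mulmxV // mulmx1.
  + by rewrite !mulmxA h1 mul1mx -mulmxA h1 mulmx1.
- by move=> [N [hN ->]]; exact: (@EO_conj R n m phi' phis eps N ue us hphi hN).
Qed.
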